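(* Let $p,r,n$ be natural numbers with $p+r\le n$, and let $\sigma$ be the involution of $\mathrm{Match}(\mathcal G_n)_{p,r}$ induced by reflecting $\mathcal G_n$ across its vertical axis of symmetry. Then $$\binom{n-r}{p}_{-1}\binom{n+1-p}{r}_{-1}=\big|\{P\in\mathrm{Match}(\mathcal G_n)_{p,r}:\sigma(P)=P\}\big|.$$
   Context: $\mathcal G_n$ ($n\ge0$) is a horizontal row of $2n+1$ unit square tiles $G_{-n},\dots,G_n$ (left to right, consecutive tiles sharing a vertical edge), where $G_i$ has face weight $1$ if $i+n$ is even and $2$ if $i+n$ is odd. $P_{min}$ is the perfect matching consisting of the top and bottom edges of all tiles of face weight $1$. For a perfect matching $P$, $\mathrm{Twist}(P)$ is the set of tiles in the interior of cycles of $P\triangle P_{min}$, and $y_i(P)$ the number of twisted tiles of face weight $i$. $\mathrm{Match}(\mathcal G_n)_{p,r}$ is the set of perfect matchings $P$ with $y_1(P)=n+1-r$ and $y_2(P)=p$; the reflection preserves $y_1,y_2$ and hence restricts to an involution $\sigma$ of this set. $\binom nk_{-1}$ is the value at $q=-1$ of the Gaussian binomial $\frac{(n)_q!}{(k)_q!(n-k)_q!}$, $(n)_q=1+q+\dots+q^{n-1}$. *)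

(* Defs.v *)
From HB Require Import structures.
From mathcomp Require Import all_boot all_order all_algebra.
Set Implicit Arguments. Unset Strict Implicit. Unset Printing Implicit Defensive.
Import Order.TTheory GRing.Theory Num.Theory.

Local Open Scope ring_scope.

Definition qint (m : nat) : {poly rat} := \sum_(i < m) 'X^i.
Definition qfact (m : nat) : {poly rat} := \prod_(1 <= i < m.+1) qint i.
Definition gauss_binom (m k : nat) : {poly rat} :=
  qfact m %/ (qfact k * qfact (m - k)).
Definition gauss_binom_m1 (m k : nat) : rat := (gauss_binom m k).[-1].

Local Close Scope ring_scope.

(* Columns of vertices are numbered 0 .. 2n+1 (left to right); tile G_i,
   i = -n..n, is stored as k = i+n in 0..2n and has corners in columns k,k+1.
   Face weight of tile k is 1 if k is even, 2 if k is odd.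
   Vertices: (top? : bool, column).
   Edges: inl (top?, k) = top (true) / bottom (false) horizontal edge of tile k;
          inr j = vertical edge in column j. *)
Definition vertex (n : nat) := (bool * 'I_(n.*2.+2))%type.
Definition edge (n : nat) := ((bool * 'I_(n.*2.+1)) + 'I_(n.*2.+2))%type.

Definition incident n (e : edge n) (v : vertex n) : bool :=
  match e with
  | inl (b, k) => (v.1 == b) && (((v.2 : nat) == k) || ((v.2 : nat) == k.+1))
  | inr j => (v.2 : nat) == j
  end.

Definition perfect_matching n (P : {set edge n}) : bool :=
  [forall v : vertex n, #|[set e in P | incident e v]| == 1].

(* P_min: top and bottom edges of all tiles of face weight 1 *)
Definition Pmin n : {set edge n} :=
  [set e : edge n | if e is inl (_, k) then ~~ odd k else false].

Definition symdiff n (A B : {set edge n}) : {set edge n} := (A :\: B) :|: (B :\: A).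

(* Edge set of the boundary of the rectangle formed by tiles a, ..., b-1
   (a < b); these are exactly the simple cycles of G_n. Its interior
   consists of tiles a .. b-1. *)
Definition rect_boundary n (a b : nat) (e : edge n) : bool :=
  match e with
  | inl (_, k) => (a <= k) && (k < b)
  | inr j => ((j : nat) == a) || ((j : nat) == b)
  end.

(* tile k lies in the interior of a cycle of P (symdiff) P_min *)
Definition twisted n (P : {set edge n}) (k : 'I_(n.*2.+1)) : bool :=
  [exists a : 'I_(n.*2.+2), exists b : 'I_(n.*2.+2),
     (a <= k) && (k < b) &&
     [forall e : edge n, rect_boundary a b e ==> (e \in symdiff P (Pmin n))]].

Definition Twist n (P : {set edge n}) : {set 'I_(n.*2.+1)} :=
  [set k | twisted P k].

(* y_1 : twisted tiles of face weight 1; y_2 : of face weight 2 *)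
Definition y1 n (P : {set edge n}) : nat := #|[set k in Twist P | ~~ odd k]|.
Definition y2 n (P : {set edge n}) : nat := #|[set k in Twist P | odd k]|.

Definition MatchG (n p r : nat) : {set {set edge n}} :=
  [set P : {set edge n} | perfect_matching P && (y1 P == n.+1 - r) && (y2 P == p)].

Definition refl_edge n (e : edge n) : edge n :=
  match e with
  | inl (b, k) => inl (b, rev_ord k)
  | inr j => inr (rev_ord j)
  end.

Definition sigma n (P : {set edge n}) : {set edge n} := [set refl_edge e | e in P].

(* Main.v *)
Require Import Defs.
From HB Require Import structures.
From mathcomp Require Import all_boot all_order all_algebra.
From mathcomp Require Import zify ring.
Set Implicit Arguments. Unset Strict Implicit. Unset Printing Implicit Defensive.
Import Order.TTheory GRing.Theory Num.Theory.

Definition gb (m k : nat) : nat := if odd k && ~~ odd m then 0 else 'C(m./2, k./2).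

Lemma half_dbl j : (j.*2)./2 = j.
Proof. exact: doubleK. Qed.
Lemma half_dbl1 j : (j.*2.+1)./2 = j.
Proof. exact: uphalf_double. Qed.

Lemma par_cases k : exists j, k = j.*2 \/ k = j.*2.+1.
Proof.
exists k./2; have := odd_double_half k; case: (odd k) => /= h; [right|left]; lia.
Qed.

Lemma gb_gt m k : m < k -> gb m k = 0.
Proof.
move=> hmk; rewrite /gb.
have [i [hm|hm]] := par_cases m; have [j [hk|hk]] := par_cases k; subst;
  rewrite ?odd_double ?half_dbl ?half_dbl1 /= ?odd_double /=.
all: by [] || (rewrite bin_small //; lia).
Qed.

Lemma gb2 m k : gb m.+2 k = gb m k + (if 1 < k then gb m (k - 2) else 0).
Proof.
case: k => [|[|k]]; rewrite /gb /= ?addn0 ?bin0 ?negbK //.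
rewrite !subSS subn0.
case: (odd k); case: (odd m) => //=; by rewrite binS addnC.
Qed.

Definition F n r p := gb (n - r) p * gb (n.+1 - p) r.

Lemma F_rec n r p :
  F n.+2 r p = F n.+1 p r + (if 1 < r then F n (r - 2) p else 0).
Proof.
rewrite /F.
case: (leqP p n.+1) => hp.
  have -> : n.+3 - p = (n.+1 - p).+2 by lia.
  rewrite gb2; case: ifP => hr.
    have -> : n - (r - 2) = n.+2 - r by lia.
    by rewrite mulnDr mulnC.
  by rewrite !addn0 mulnC.
case: (leqP p (n.+2 - r)) => hpr.
  have hr0 : r = 0 by lia.
  have hp0 : p = n.+2 by lia.
  subst; rewrite subn0.
  have -> : n.+3 - n.+2 = 1 by lia.
  have -> : n.+1 - n.+2 = 0 by lia.
  by rewrite [gb 1 0]/gb [gb 0 0]/gb /= muln1 mul1n addn0.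
rewrite (gb_gt hpr) mul0n muln0.
case: ifP => // _; rewrite gb_gt ?mul0n //; lia.
Qed.

Local Open Scope ring_scope.

Fixpoint qb (m k : nat) : {poly rat} :=
  match m, k with
  | _, 0 => 1
  | 0, _.+1 => 0
  | m1.+1, k1.+1 => qb m1 k1 + 'X^(k1.+1) * qb m1 k1.+1
  end.

Lemma qb_gt m k : (m < k)%N -> qb m k = 0.
Proof.
elim: m k => [|m IH] [|k] //= h.
by rewrite !IH ?mulr0 ?addr0 //; lia.
Qed.

Lemma qintD a b : qint (a + b) = qint a + 'X^a * qint b.
Proof.
rewrite /qint big_split_ord /= mulr_sumr; congr (_ + _).
by apply: eq_bigr => i _; rewrite exprD.
Qed.

Lemma qfactS m : qfact m.+1 = qfact m * qint m.+1.
Proof. by rewrite /qfact big_nat_recr. Qed.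

Lemma qfact0 : qfact 0 = 1.
Proof. by rewrite /qfact big_geq. Qed.

Lemma qint_neq0 m : qint m.+1 != 0.
Proof.
apply/negP => /eqP h.
have := congr1 (fun p : {poly rat} => p.[1]) h.
rewrite /qint horner_sum hornerC.
under eq_bigr => i _ do rewrite hornerXn expr1n.
by rewrite sumr_const card_ord => /eqP; rewrite pnatr_eq0.
Qed.

Lemma qfact_neq0 m : qfact m != 0.
Proof.
elim: m => [|m IH]; first by rewrite qfact0 oner_neq0.
by rewrite qfactS mulf_neq0 // qint_neq0.
Qed.

Lemma qb_fact m k : (k <= m)%N -> qb m k * (qfact k * qfact (m - k)) = qfact m.
Proof.
elim: m k => [|m IH] [|k] //= hk.
- by rewrite qfact0 !mulr1.
- by rewrite subn0 qfact0 !mul1r.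
rewrite subSS qfactS (qfactS m).
have h1 := IH k hk.
have -> : qint m.+1 = qint k.+1 + 'X^(k.+1) * qint (m - k).
  by rewrite -qintD; congr qint; lia.
case: (ltnP k m) => hkm.
  have h2 := IH k.+1 hkm.
  have e : (m - k = (m - k.+1).+1)%N by lia.
  have e2 : qfact (m - k) = qfact (m - k.+1) * qint (m - k) by rewrite e qfactS -e.
  rewrite qfactS in h2; rewrite e2 in h1 *.
  rewrite mulrDr -{1}h1 -h2; ring.
have ekm : k = m by lia.
subst k; rewrite subnn qfact0 in h1 *.
rewrite mulr1 in h1.
by rewrite (qb_gt (ltnSn m)) mulr0 addr0 [qint 0]/qint big_ord0 mulr0 addr0 mulr1 mulrA h1.
Qed.

Lemma gauss_qb m k : (k <= m)%N -> gauss_binom m k = qb m k.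
Proof.
move=> hk; rewrite /gauss_binom -(qb_fact hk) mulpK //.
by rewrite mulf_neq0 // qfact_neq0.
Qed.

Lemma qb_m1 m k : (qb m k).[-1] = (gb m k)%:R.
Proof.
elim: m k => [|m IH] [|k].
- by rewrite /= hornerC.
- by rewrite /= horner0 gb_gt.
- by rewrite /= hornerC /gb /= bin0.
rewrite /= hornerD hornerM hornerXn !IH -signr_odd.
have [i [hm|hm]] := par_cases m; have [j [hk|hk]] := par_cases k; subst;
  rewrite /gb /= ?odd_double ?half_dbl ?half_dbl1 /= ?uphalf_double ?half_dbl.
- by rewrite mulr0 addr0.
- by rewrite expr0 mul1r add0r.
- by rewrite expr1 mulN1r subrr.
- by rewrite expr0 mul1r binS natrD addrC.
Qed.

Local Close Scope ring_scope.

Fixpoint bseqs m : seq (seq bool) :=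
  if m is m'.+1 then [seq false :: s | s <- bseqs m'] ++ [seq true :: s | s <- bseqs m']
  else [:: [::]].

Lemma mem_bseqs m s : (s \in bseqs m) = (size s == m).
Proof.
elim: m s => [|m IH] s; first by case: s.
case: s => [|a s] /=.
  by rewrite mem_cat; apply/negbTE; rewrite negb_or; apply/andP; split; apply/mapP => -[].
rewrite mem_cat eqSS -IH.
have inj1 : forall b : bool, injective (cons b) by move=> b x y [->].
case: a; rewrite !(mem_map (inj1 _)).
  suff -> : (true :: s \in [seq false :: s0 | s0 <- bseqs m]) = false by [].
  by apply/negbTE/mapP => -[x _].
suff -> : (false :: s \in [seq true :: s0 | s0 <- bseqs m]) = false by rewrite orbF.
by apply/negbTE/mapP => -[x _].
Qed.

Lemma uniq_bseqs m : uniq (bseqs m).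
Proof.
elim: m => [|m IH] //=.
have inj1 : forall b : bool, injective (cons b) by move=> b x y [->].
rewrite cat_uniq !(map_inj_uniq (inj1 _)) IH /= andbT.
by apply/hasPn => x /mapP [y _ ->]; apply/mapP => -[z _].
Qed.

Fixpoint noadj (l : seq bool) : bool :=
  if l is a :: l' then ~~ (a && head false l') && noadj l' else true.

Fixpoint ceco (l : seq bool) : nat * nat :=
  if l is a :: l' then ((a : nat) + (ceco l').2, (ceco l').1) else (0, 0).

Definition ce l := (ceco l).1.
Definition co l := (ceco l).2.

Definition mk (s : seq bool) := s ++ behead (rev s).

Definition Qf r p s := noadj (mk s) && (ce (mk s) == r) && (co (mk s) == p).
Definition Scnt n r p := count (Qf r p) (bseqs n.+1).

Lemma mkS a s : s != [::] -> mk (a :: s) = a :: rcons (mk s) a.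
Proof.
rewrite /mk rev_cons; case/lastP: s => [//|s x] _.
by rewrite rev_rcons /= rcons_cat.
Qed.

Lemma noadj_rcons l a : noadj (rcons l a) = noadj l && ~~ (last false l && a).
Proof.
elim: l => [|b l IH] /=; first by rewrite andbF.
rewrite IH; case: l IH => [|c l] _ /=; first by rewrite !andbT andbF.
by rewrite !andbA.
Qed.

Lemma ceco_rcons l a :
  ceco (rcons l a) = (ce l + (a && ~~ odd (size l)), co l + (a && odd (size l))).
Proof.
elim: l => [|b l IH] /=; first by case: a.
rewrite IH /ce /co /= negbK; congr (_, _); lia.
Qed.

Lemma ce_rcons l a : ce (rcons l a) = ce l + (a && ~~ odd (size l)).
Proof. by rewrite /ce ceco_rcons. Qed.
Lemma co_rcons l a : co (rcons l a) = co l + (a && odd (size l)).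
Proof. by rewrite /co ceco_rcons. Qed.

Lemma size_mk s : size (mk s) = size s + (size s).-1.
Proof. by rewrite /mk size_cat size_behead size_rev. Qed.

Lemma bseqsS m : bseqs m.+1 = [seq false :: s | s <- bseqs m] ++ [seq true :: s | s <- bseqs m].
Proof. by []. Qed.

Lemma S_rec n r p : Scnt n.+2 r p = Scnt n.+1 p r + (if 1 < r then Scnt n (r - 2) p else 0).
Proof.
rewrite /Scnt (bseqsS n.+2) count_cat !count_map.
congr (_ + _).
  apply: eq_in_count => s; rewrite mem_bseqs => /eqP hs /=.
  have s0 : s != [::] by rewrite -size_eq0 hs.
  rewrite /Qf mkS // /ce /co /= noadj_rcons ceco_rcons /= !addn0 andbF andbT.
  by rewrite -andbA [(_ == r) && _]andbC andbA.
rewrite (bseqsS n.+1) count_cat !count_map.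
have -> : count (preim (cons true) (preim (cons true) (Qf r p))) (bseqs n.+1) = 0.
  rewrite -(count_pred0 (bseqs n.+1)); apply: eq_in_count => s.
  rewrite mem_bseqs => /eqP hs /=.
  have s0 : s != [::] by rewrite -size_eq0 hs.
  by rewrite /Qf mkS // mkS //.
rewrite addn0.
rewrite (@eq_in_count _ _ (fun s => (1 < r) && Qf (r - 2) p s)); last first.
  move=> s; rewrite mem_bseqs => /eqP hs /=.
  have s0 : s != [::] by rewrite -size_eq0 hs.
  have hodd : odd (size (mk s)) by rewrite size_mk hs /= addnn odd_double.
  rewrite /Qf mkS // mkS // /ce /co /= !noadj_rcons !ceco_rcons /= size_rcons /=.
  rewrite ce_rcons co_rcons hodd last_rcons /= !addn0 !andbF !andbT /ce /co.
  case: r => [|[|r]] /=; rewrite ?andbF //.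
  - by rewrite addn1 add1n /=; case: (noadj _).
  by rewrite !subSS subn0 addn1 add1n !eqSS add0n.
by case: ifP => h //; rewrite count_pred0.
Qed.

Lemma S0 r p : Scnt 0 r p = F 0 r p.
Proof.
rewrite /Scnt /F /= /Qf /mk /ce /co /=.
case: r => [|[|r]]; case: p => [|p] //=.
all: rewrite ?(@gb_gt 0 p.+1) ?(@gb_gt 1 r.+2) ?muln0 //.
Qed.

Lemma S1 r p : Scnt 1 r p = F 1 r p.
Proof.
rewrite /Scnt /F /= /Qf /mk /ce /co /=.
case: r => [|[|[|r]]]; case: p => [|[|p]] //=.
all: rewrite ?(@gb_gt 0 p.+1) ?(@gb_gt 0 p.+2) ?(@gb_gt 1 p.+2) ?(@gb_gt 2 r.+3) ?(@gb_gt 1 r.+3) ?muln0 ?mul0n //.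
Qed.

Lemma S_F n r p : Scnt n r p = F n r p.
Proof.
suff H : forall n, (forall r p, Scnt n r p = F n r p) /\ (forall r p, Scnt n.+1 r p = F n.+1 r p).
  by case: (H n).
elim=> [|m [IH1 IH2]]; first by split; [exact: S0 | exact: S1].
by split=> // r0 p0; rewrite S_rec F_rec IH1 IH2.
Qed.
Definition vertb (t : seq bool) (j : nat) :=
  ~~ ((0 < j) && nth false t j.-1) && ~~ nth false t j.

Definition buildP n (t : seq bool) : {set edge n} :=
  [set e : edge n | match e with inl (_, k) => nth false t k | inr j => vertb t j end].

Definition decodeF n (P : {set edge n}) : seq bool :=
  mkseq (fun k => (inl (true, inord k) : edge n) \in P) n.*2.+1.

Lemma size_decodeF n (P : {set edge n}) : size (decodeF P) = n.*2.+1.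
Proof. by rewrite size_mkseq. Qed.

Lemma nth_decodeF n (P : {set edge n}) (k : 'I_(n.*2.+1)) :
  nth false (decodeF P) k = ((inl (true, k) : edge n) \in P).
Proof. by rewrite nth_mkseq // inord_val. Qed.

Lemma decode_build n t : size t = n.*2.+1 -> decodeF (buildP n t) = t.
Proof.
move=> ht; apply: (@eq_from_nth _ false); rewrite ?size_decodeF //.
by move=> i hi; rewrite nth_mkseq // inE /= inordK.
Qed.

Lemma noadj_nth t : noadj t -> forall k, ~~ (nth false t k && nth false t k.+1).
Proof.
elim: t => [|a t IH] /=; first by move=> _ k; rewrite nth_nil.
move=> /andP [h1 h2] [|k] /=; first by rewrite nth0.
exact: IH.
Qed.

Lemma nth_noadj t : (forall k, ~~ (nth false t k && nth false t k.+1)) -> noadj t.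
Proof.
elim: t => [|a t IH] //= h; apply/andP; split; first by have := h 0; rewrite /= nth0.
by apply: IH => k; exact: h k.+1.
Qed.

Lemma pm_one n (P : {set edge n}) : perfect_matching P ->
  forall v : vertex n, exists e0, forall e, ((e \in P) && incident e v) = (e == e0).
Proof.
move=> /forallP H v; have /cards1P [e0 he0] := H v; exists e0 => e.
by rewrite -in_set1 -he0 inE.
Qed.

Lemma pm_uniq n (P : {set edge n}) v e1 e2 : perfect_matching P ->
  e1 \in P -> incident e1 v -> e2 \in P -> incident e2 v -> e1 = e2.
Proof.
move=> /pm_one /(_ v) [e0 h] h1 i1 h2 i2.
have /eqP -> : e1 == e0 by rewrite -h h1 i1.
by have /eqP -> : e2 == e0 by rewrite -h h2 i2.
Qed.

Lemma pm_ex n (P : {set edge n}) v : perfect_matching P ->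
  exists e, (e \in P) && incident e v.
Proof. by move=> /pm_one /(_ v) [e0 h]; exists e0; rewrite h. Qed.

Lemma card1_intro (T : finType) (A : {set T}) :
  (exists x, x \in A) -> {in A &, forall x y, x = y} -> #|A| == 1.
Proof.
move=> [x hx] h; apply/cards1P; exists x; apply/setP => y; rewrite inE.
by apply/idP/eqP => [hy|->//]; exact: h.
Qed.

Lemma pm_tb n (P : {set edge n}) : perfect_matching P ->
  forall (k : 'I_(n.*2.+1)) b, (inl (b, k) : edge n) \in P -> (inl (~~ b, k) : edge n) \in P.
Proof.
move=> pm.
suff H : forall i (k : 'I_(n.*2.+1)) b, (k : nat) = i ->
    (inl (b, k) : edge n) \in P -> (inl (~~ b, k) : edge n) \in P.
  by move=> k b; exact: H.
elim/ltn_ind => i IH k b hki hb.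
have hkc : k < n.*2.+2 by apply: (leq_trans (ltn_ord k)).
pose c : 'I_(n.*2.+2) := inord k.
have hc : (c : nat) = k by rewrite inordK.
have [e /andP [he hie]] := pm_ex (~~ b, c) pm.
case: e he hie => [[b' k'] | j] he /=.
- move=> /andP [/eqP hb' /orP [/eqP h1 | /eqP h2]]; subst b'.
    by have -> : k = k' by apply/val_inj; rewrite /= -hc h1.
  have hk' : (k' : nat) < i by rewrite -hki -hc h2.
  have := IH _ hk' k' (~~ b) erefl he; rewrite negbK => hb2.
  have := @pm_uniq _ _ (b, c) _ _ pm hb2 _ hb.
  rewrite /= eqxx h2 eqxx orbT => /(_ isT).
  rewrite -h2 hc eqxx /= => /(_ isT) [] /(congr1 val) /= hk; move: h2; rewrite hc -hk; lia.
- move=> /eqP hj.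
  have := @pm_uniq _ _ (b, c) _ _ pm he _ hb.
  by rewrite /= hj eqxx => /(_ isT); rewrite eqxx -hj hc eqxx => /(_ isT).
Qed.

Lemma pm_noadj n (P : {set edge n}) : perfect_matching P -> noadj (decodeF P).
Proof.
move=> pm; apply: nth_noadj => k.
case: (ltnP k.+1 n.*2.+1) => hk; last first.
  by rewrite (@nth_default _ _ _ k.+1) ?andbF // size_decodeF.
have hk1 : k < n.*2.+1 by lia.
have := nth_decodeF P (Ordinal hk1); have := nth_decodeF P (Ordinal hk) => /= -> ->.
apply/negP => /andP [h1 h2].
have hc : k.+1 < n.*2.+2 by lia.
have := @pm_uniq _ _ (true, Ordinal hc) _ _ pm h1 _ h2.
rewrite /= !eqxx orbT /= => /(_ isT isT) [].
lia.
Qed.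

Lemma pm_vert n (P : {set edge n}) : perfect_matching P ->
  forall j : 'I_(n.*2.+2), ((inr j : edge n) \in P) = vertb (decodeF P) j.
Proof.
move=> pm j; rewrite /vertb.
apply/idP/idP.
- move=> hj; apply/andP; split.
    apply/negP => /andP [hj0 ht].
    have hk : j.-1 < n.*2.+1 by have := ltn_ord j; lia.
    move: ht; have -> := nth_decodeF P (Ordinal hk) => ht.
    have := @pm_uniq _ _ (true, j) _ _ pm hj _ ht.
    rewrite /= !eqxx /= => /(_ isT).
    have -> : (j : nat) == j.-1.+1 by rewrite prednK.
    by rewrite orbT => /(_ isT).
  apply/negP => ht.
  have hk : (j : nat) < n.*2.+1.
    by move: ht; case: ltnP => // h; rewrite nth_default // size_decodeF.
  move: ht; have -> := nth_decodeF P (Ordinal hk) => ht.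
  have := @pm_uniq _ _ (true, j) _ _ pm hj _ ht.
  by rewrite /= !eqxx /= => /(_ isT isT).
- move=> /andP [h1 h2].
  have [[[b k]|j'] /andP [he hie]] := pm_ex (true, j) pm; move: hie => /=.
  + move=> /andP [/eqP hb /orP [/eqP hjk|/eqP hjk]]; subst b.
      by move: h2; rewrite hjk nth_decodeF he.
    by move: h1; rewrite hjk /= nth_decodeF he.
  + by move=> /eqP hjj; have -> : j = j' by apply/val_inj.
Qed.

Lemma pm_build n (P : {set edge n}) : perfect_matching P -> P = buildP n (decodeF P).
Proof.
move=> pm; apply/setP => -[[b k]|j]; rewrite inE /=.
  rewrite nth_decodeF; case: b => //.
  by apply/idP/idP => /(pm_tb pm).
exact: pm_vert.
Qed.

Lemma inl_vert_contra t (c : nat) (k : nat) :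
  nth false t k -> (c == k) || (c == k.+1) -> vertb t c -> False.
Proof.
move=> hk /orP [/eqP e|/eqP e]; rewrite /vertb e.
  by rewrite hk andbF.
by rewrite /= hk.
Qed.

Lemma build_pm n t : size t = n.*2.+1 -> noadj t -> perfect_matching (buildP n t).
Proof.
move=> ht hna; have na := noadj_nth hna.
apply/forallP => -[b c]; apply: card1_intro.
- case h1: ((0 < c) && nth false t c.-1).
    have hk : c.-1 < n.*2.+1 by have := ltn_ord c; lia.
    case/andP: h1 => h0 h1.
    exists (inl (b, Ordinal hk)); rewrite !inE /= h1 eqxx /=.
    by rewrite prednK // eqxx orbT.
  case h2: (nth false t c).
    have hk : (c : nat) < n.*2.+1.
      by move: h2; case: ltnP => // h; rewrite nth_default // ht.
    by exists (inl (b, Ordinal hk)); rewrite !inE /= h2 !eqxx.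
  by exists (inr c); rewrite !inE /= /vertb h1 h2 eqxx.
- move=> e1 e2; rewrite !inE.
  case: e1 => [[b1 k1]|j1] /= /andP [p1 i1]; case: e2 => [[b2 k2]|j2] /= /andP [p2 i2].
  + move: i1 i2 => /andP [/eqP <- o1] /andP [/eqP <- o2].
    have ek : (k1 : nat) = k2.
      case/orP: o1 => /eqP e1; case/orP: o2 => /eqP e2; try lia.
        have e : (k1 : nat) = k2.+1 by lia.
        by move: (na k2); rewrite p2 -e p1.
      have e : (k2 : nat) = k1.+1 by lia.
      by move: (na k1); rewrite p1 -e p2.
    by have -> : k1 = k2 by apply/val_inj.
  + by case: (inl_vert_contra p1 (proj2 (andP i1)) ); move: i2 p2 => /eqP ->.
  + by case: (inl_vert_contra p2 (proj2 (andP i2)) ); move: i1 p1 => /eqP ->.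
  + by move: i1 i2 => /eqP e1 /eqP e2; congr inr; apply/val_inj; rewrite /= -e1 -e2.
Qed.

Lemma in_symdiff n (A B : {set edge n}) e :
  (e \in symdiff A B) = (e \in A) (+) (e \in B).
Proof. by rewrite !inE; case: (e \in A); case: (e \in B). Qed.

Lemma walk_left t k : noadj t -> forall a, ~~ odd a -> a <= k -> ~~ nth false t a ->
  (forall j, a <= j < k -> nth false t j = odd j) ->
  exists a0, [/\ a0 <= k, vertb t a0 & forall j, a0 <= j < k -> nth false t j = odd j].
Proof.
move=> /noadj_nth na; elim/ltn_ind => a IH ea hak hta hj.
case: a IH ea hak hta hj => [|a] IH ea hak hta hj.
  by exists 0; split => //; rewrite /vertb /= hta.
case ht: (nth false t a).
  case: a IH ea hak hta hj ht => [|a] IH ea hak hta hj ht //.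
  have hta2 : ~~ nth false t a by move: (na a); rewrite ht andbT.
  have ea' : ~~ odd a by move: ea; rewrite /= negbK.
  apply: (IH a) => //; first lia.
  move=> j /andP [j1 j2]; case: (ltnP j a.+2) => j3.
    have [->|->] : j = a \/ j = a.+1 by lia.
      by rewrite (negbTE hta2) (negbTE ea').
    by rewrite ht /= ea'.
  by apply: hj; lia.
by exists a.+1; split => //; rewrite /vertb /= ht.
Qed.

Lemma walk_right t k N : size t = N -> odd N -> noadj t ->
  forall b, odd b -> k < b -> b <= N ->
  (forall j, k <= j < b -> nth false t j = odd j) ->
  exists b0, [/\ k < b0, b0 <= N, vertb t b0 &
                 forall j, k <= j < b0 -> nth false t j = odd j].
Proof.
move=> hs oN /noadj_nth na b.
move: {2}(N - b) (leqnn (N - b)) => d; elim: d b => [|d IH] b hd ob kb bN hj.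
all: case ht: (nth false t b).
all: try (exists b; split => //; rewrite /vertb ht andbT;
       have -> : nth false t b.-1 = odd b.-1 by apply: hj; lia);
     try (by case: b ob {hd kb bN hj ht} => //= b; rewrite andbF).
all: have hbN : b < N by move: ht; case: ltnP => // h; rewrite nth_default // hs.
  exfalso; lia.
have hb1 : b.+1 != N by apply/eqP => e; move: oN; rewrite -e /= ob.
have ht1 : nth false t b.+1 = false by move: (na b); rewrite ht /= => /negbTE.
apply: (IH b.+2) => //; try lia.
move=> j /andP [j1 j2]; case: (ltnP j b) => j3; first by apply: hj; lia.
have [->|->] : j = b \/ j = b.+1 by lia.
  by rewrite ht ob.
by rewrite ht1 -addn1 oddD ob.
Qed.

Lemma twistedE n t (k : 'I_(n.*2.+1)) : size t = n.*2.+1 -> noadj t ->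
  twisted (buildP n t) k = (nth false t k == odd k).
Proof.
move=> hs hna; have na := noadj_nth hna.
have hkN := ltn_ord k.
apply/idP/idP.
  case/existsP => a /existsP [b /andP [/andP [ha hb] /forallP H]].
  have := implyP (H (inl (true, k))); rewrite /= ha hb in_symdiff !inE /= => /(_ isT).
  by case: (nth false t k); case: (odd k).
move=> /eqP htk.
have [a0 [ha0 va0 Ha]] : exists a0, [/\ a0 <= k, vertb t a0 &
      forall j, a0 <= j < k -> nth false t j = odd j].
  case ok: (odd k).
    have k0 : 0 < k by move: ok; case: (nat_of_ord k).
    have ok1 : ~~ odd k.-1 by move: ok; rewrite -{1}(prednK k0) /=.
    have ht1 : ~~ nth false t k.-1.
      by move: (na k.-1); rewrite prednK // htk ok andbT.
    apply: (walk_left hna ok1) => //; first lia.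
    move=> j hj; have -> : j = k.-1 by lia.
    by rewrite (negbTE ht1) (negbTE ok1).
  apply: (walk_left hna (a := k)) => //; first by rewrite ok.
    by rewrite htk ok.
  move=> j; lia.
have oN : odd n.*2.+1 by rewrite /= odd_double.
have [b0 [hb0 b0N vb0 Hb]] : exists b0, [/\ k < b0, b0 <= n.*2.+1, vertb t b0 &
      forall j, k <= j < b0 -> nth false t j = odd j].
  case ok: (odd k).
    have hk1 : (k : nat).+1 != n.*2.+1.
      by apply/eqP => e; move: oN; rewrite -e /= ok.
    have ht1 : nth false t k.+1 = false by move: (na k); rewrite htk ok /= => /negbTE.
    apply: (walk_right hs oN hna (b := k.+2)) => //; try lia.
    move=> j hj; have [->|->] : j = k \/ j = k.+1 by lia.
      by rewrite htk.
    by rewrite ht1 -addn1 oddD ok.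
  apply: (walk_right hs oN hna (b := k.+1)) => //; try lia.
  move=> j hj; have -> : j = k by lia.
  by rewrite htk.
apply/existsP; exists (inord a0); apply/existsP; exists (inord b0).
rewrite !inordK; try lia.
rewrite ha0 hb0 /=.
apply/forallP => -[[b' k']|j]; apply/implyP; rewrite /= in_symdiff !inE /=.
  move=> /andP [h1 h2].
  have -> : nth false t k' = odd k'.
    by case: (ltnP k' k) => h3; [apply: Ha | apply: Hb]; lia.
  by case: (odd k').
by move=> /orP [/eqP ->|/eqP ->]; rewrite ?va0 ?vb0.
Qed.

Lemma sigma_build n t : size t = n.*2.+1 -> sigma (buildP n t) = buildP n (rev t).
Proof.
move=> hs.
have inv : involutive (@refl_edge n) by case => [[b k]|j] /=; rewrite rev_ordK.
rewrite /sigma (can_imset_pre _ inv); apply/setP => e; rewrite !inE.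
case: e => [[b k]|j] /=; rewrite ?inE /=.
  by rewrite nth_rev ?hs.
rewrite /vertb; case: j => j hj /=.
case: j hj => [|j] hj.
  rewrite subn1 /= nth_rev ?hs // (@nth_default _ _ t n.*2.+1) ?hs //.
  by rewrite subn1 /= andbT.
case: (ltnP j.+1 n.*2.+1) => hj1.
  rewrite !nth_rev ?hs //; try lia.
  have -> : n.*2.+2 - j.+2 = (n.*2 - j) by lia.
  have -> : n.*2.+1 - j.+1 = (n.*2 - j) by lia.
  have -> : n.*2.+1 - j.+2 = (n.*2 - j).-1 by lia.
  have -> : 0 < n.*2 - j by lia.
  by rewrite /= andbC.
have ej : j = n.*2 by lia.
subst j; rewrite subnn /= nth_rev ?hs // (@nth_default _ _ (rev t) n.*2.+1) ?size_rev ?hs //.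
by rewrite subnn andbT.
Qed.

Lemma card_setE N (f : nat -> bool) : #|[set k : 'I_N | f k]| = \sum_(0 <= k < N) f k.
Proof.
rewrite big_mkord -sum1_card big_mkcond; apply: eq_bigr => i _; rewrite inE.
by case: (f i).
Qed.

Lemma ceco_sum l : ce l = \sum_(0 <= k < size l) (~~ odd k && nth false l k) /\
                   co l = \sum_(0 <= k < size l) (odd k && nth false l k).
Proof.
elim: l => [|a l [IH1 IH2]]; first by rewrite /ce /co !big_geq.
rewrite /= !big_nat_recl //= /ce /co /= -/(ce l) -/(co l) IH1 IH2.
split; last by rewrite add0n.
congr (_ + _); apply: eq_bigr => i _; by rewrite negbK.
Qed.

Lemma sum_even n : \sum_(0 <= k < n.*2.+1) ~~ odd k = n.+1.
Proof.
elim: n => [|n IH]; first by rewrite big_nat1.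
rewrite doubleS big_nat_recr // big_nat_recr //= IH /= odd_double /=; lia.
Qed.

Lemma y_build n t : size t = n.*2.+1 -> noadj t ->
  y1 (buildP n t) + ce t = n.+1 /\ y2 (buildP n t) = co t.
Proof.
move=> hs hna; have [hce hco] := ceco_sum t.
split.
  rewrite /y1 (_ : [set k in Twist _ | ~~ odd k] =
                  [set k : 'I_(n.*2.+1) | ~~ nth false t k && ~~ odd k]); last first.
    apply/setP => k; rewrite !inE twistedE //.
    by case: (nth false t k); case: (odd k).
  rewrite (@card_setE _ (fun k => ~~ nth false t k && ~~ odd k)) hce hs -big_split /= -(sum_even n).
  by apply: eq_bigr => i _; case: (nth false t i); case: (odd i).
rewrite /y2 (_ : [set k in Twist _ | odd k] =
                [set k : 'I_(n.*2.+1) | odd k && nth false t k]); last first.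
  apply/setP => k; rewrite !inE twistedE //.
  by case: (nth false t k); case: (odd k).
by rewrite (@card_setE _ (fun k => odd k && nth false t k)) hco hs.
Qed.

Lemma rev_mk s : rev (mk s) = mk s.
Proof.
rewrite /mk; case/lastP: s => [//|s0 y0].
rewrite rev_rcons /=.
by rewrite rev_cat revK rev_rcons cat_rcons.
Qed.

Lemma size_mk' n s : size s = n.+1 -> size (mk s) = n.*2.+1.
Proof. by move=> h; rewrite size_mk h /= addSn addnn. Qed.

Lemma take_mk n s : size s = n.+1 -> take n.+1 (mk s) = s.
Proof. by move=> h; rewrite /mk take_cat h ltnn subnn take0 cats0. Qed.

Lemma mk_take n t : size t = n.*2.+1 -> rev t = t -> mk (take n.+1 t) = t.
Proof.
move=> hs hr; rewrite /mk rev_take hr hs.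
have -> : n.*2.+1 - n.+1 = n by lia.
by rewrite -drop1 drop_drop add1n cat_take_drop.
Qed.

Lemma size_take_half n (t : seq bool) : size t = n.*2.+1 -> size (take n.+1 t) = n.+1.
Proof. by move=> hs; rewrite size_take hs; case: (ltnP n.+1 n.*2.+1) => // h; lia. Qed.

Lemma card_sym n p r : r <= n ->
  #|[set P in MatchG n p r | sigma P == P]| = Scnt n r p.
Proof.
move=> hrn.
set L := [seq buildP n (mk s) | s <- filter (Qf r p) (bseqs n.+1)].
have uL : uniq L.
  rewrite map_inj_in_uniq ?filter_uniq ?uniq_bseqs //.
  move=> s1 s2; rewrite !mem_filter !mem_bseqs => /andP [_ /eqP h1] /andP [_ /eqP h2] e.
  have := congr1 (@decodeF n) e; rewrite !decode_build ?(size_mk' h1) ?(size_mk' h2) //.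
  by move/(congr1 (take n.+1)); rewrite (take_mk h1) (take_mk h2).
have -> : #|[set P in MatchG n p r | sigma P == P]| = size L.
  rewrite -(card_uniqP uL); apply: eq_card => P; rewrite inE.
  apply/idP/idP.
  - case/andP => hM /eqP hsP; move: hM; rewrite inE => /andP [/andP [pm /eqP hy1] /eqP hy2].
    have ht := size_decodeF P; have hna := pm_noadj pm; have eP := pm_build pm.
    set t := decodeF P in ht hna eP.
    have ert : rev t = t.
      rewrite eP sigma_build // in hsP.
      by have := congr1 (@decodeF n) hsP; rewrite !decode_build ?size_rev.
    have [yc yo] := y_build ht hna; rewrite -eP in yc yo.
    apply/mapP; exists (take n.+1 t); last by rewrite (mk_take ht ert).
    rewrite mem_filter mem_bseqs (size_take_half ht) eqxx andbT /Qf (mk_take ht ert) hna /=.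
    apply/andP; split; apply/eqP; lia.
  - move/mapP => [s]; rewrite mem_filter mem_bseqs => /andP [hQ /eqP hsz] ->.
    move: hQ; rewrite /Qf => /andP [/andP [hna /eqP hce] /eqP hco].
    have ht := size_mk' hsz.
    have [yc yo] := y_build ht hna.
    rewrite !inE build_pm //= sigma_build // rev_mk eqxx andbT.
    apply/andP; split; apply/eqP; lia.
by rewrite size_map size_filter.
Qed.

Unset Implicit Arguments.

Theorem mainTheorem11 (p r n : nat) (hpr : (p + r <= n)%N) :
  (gauss_binom_m1 (n - r) p * gauss_binom_m1 (n.+1 - p) r)%R
  = (#|[set P in MatchG n p r | sigma P == P]|%:R : rat).
Proof.
rewrite card_sym; last lia.
rewrite S_F /F natrM /gauss_binom_m1 !gauss_qb ?qb_m1 //; lia.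
Qed.
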